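(* Let $E$ be a finite non-abelian $p$-group of nilpotency class $2$ with cyclic centre. For $n\ge0$ let $E_n=E^{p^n}$ with coordinates indexed by $1,\dots,p^n$, $Z_n=Z(E_n)$, $F_n=\{(x^{(i)})\in Z_n:x^{(1)}\cdots x^{(p^n)}=1\}$, $K_n=E_n/F_n$, $L_n=Z_n/F_n$. Let $J_n=K_n\rtimes\langle\alpha_n\rangle$, where $\alpha_n$ has order $p^n$ and acts by the cyclic shift induced from $E_n$: conjugation by $\alpha_n$ sends $x=(x^{(i)})$ to $y$ with $y^{(i)}=x^{(i-1)}$, indices mod $p^n$ in $\{1,\dots,p^n\}$ (so $J_n$ is the wreath-central product of $E$ with $C_{p^n}$). For $n\ge1$ define $\varphi_n:E_n\to E_{n-1}$ by letting the $i$-th coordinate of $\varphi_n(x)$ be $\prod_{r\equiv i\ (\mathrm{mod}\ p^{n-1})}x^{(r)}$, factors in increasing order of $r$. Then $\varphi_n$ induces a homomorphism $\psi_n:K_n/L_n\cong E_n/Z_n\to E_{n-1}/Z_{n-1}\cong K_{n-1}/L_{n-1}$, and $\psi_n$ extends, via $\psi_n(\alpha_n)=\alpha_{n-1}$, to a homomorphism $J_n/L_n\to J_{n-1}/L_{n-1}$. *)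

(* Defs.v *)
From HB Require Import structures.
From mathcomp Require Import all_boot all_order all_algebra all_fingroup all_solvable.

Set Implicit Arguments.
Unset Strict Implicit.
Unset Printing Implicit Defensive.

Import GRing.Theory.

(* Coordinates 1..N (N = m.+1) are represented by 'I_m.+1 via i |-> i+1. *)
Section Defs.
Variable gT : finGroupType.
Variable m : nat.

Definition fpow := {ffun 'I_m.+1 -> gT}.
HB.instance Definition _ := Finite.on fpow.

Definition fpow_mul (x y : fpow) : fpow := [ffun i => (x i * y i)%g].
Definition fpow_one : fpow := [ffun => 1%g].
Definition fpow_inv (x : fpow) : fpow := [ffun i => ((x i)^-1)%g].

Lemma fpow_mulA : associative fpow_mul.
Proof. by move=> x y z; apply/ffunP=> i; rewrite !ffunE mulgA. Qed.
Lemma fpow_mul1 : left_id fpow_one fpow_mul.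
Proof. by move=> x; apply/ffunP=> i; rewrite !ffunE mul1g. Qed.
Lemma fpow_mulV : left_inverse fpow_one fpow_inv fpow_mul.
Proof. by move=> x; apply/ffunP=> i; rewrite !ffunE mulVg. Qed.

HB.instance Definition _ := Finite_isGroup.Build fpow fpow_mulA fpow_mul1 fpow_mulV.

Definition shift (a : 'I_m.+1) (x : fpow) : fpow := [ffun i => x (i - a)%R].

(* E^(m+1) semidirect <alpha>, alpha of order m.+1 acting by the shift;
   (x, a) stands for x * alpha^a, and alpha x alpha^-1 = shift 1 x *)
Definition wr := (fpow * 'I_m.+1)%type.
HB.instance Definition _ := Finite.on wr.

Definition wr_mul (u v : wr) : wr := ((u.1 * shift u.2 v.1)%g, (u.2 + v.2)%R).
Definition wr_one : wr := (1%g, 0%R).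
Definition wr_inv (u : wr) : wr := (shift (- u.2)%R (u.1^-1)%g, (- u.2)%R).

Lemma shiftM a (x y : fpow) : shift a (x * y)%g = (shift a x * shift a y)%g.
Proof. by apply/ffunP=> i; rewrite !ffunE. Qed.
Lemma shiftV a (x : fpow) : shift a (x^-1)%g = ((shift a x)^-1)%g.
Proof. by apply/ffunP=> i; rewrite !ffunE. Qed.
Lemma shift_shift a b (x : fpow) : shift a (shift b x) = shift (a + b)%R x.
Proof. by apply/ffunP=> i; rewrite !ffunE opprD addrA. Qed.
Lemma shift0 (x : fpow) : shift 0%R x = x.
Proof. by apply/ffunP=> i; rewrite !ffunE subr0. Qed.

Lemma wr_mulA : associative wr_mul.
Proof.
move=> [x a] [y b] [z c]; rewrite /wr_mul /=.
by rewrite shiftM shift_shift mulgA addrA.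
Qed.
Lemma wr_mul1 : left_id wr_one wr_mul.
Proof. by move=> [x a]; rewrite /wr_mul /= shift0 mul1g add0r. Qed.
Lemma wr_mulV : left_inverse wr_one wr_inv wr_mul.
Proof.
by move=> [x a]; rewrite /wr_mul /= -shiftM mulVg addNr; congr pair;
  apply/ffunP=> i; rewrite !ffunE.
Qed.

HB.instance Definition _ := Finite_isGroup.Build wr wr_mulA wr_mul1 wr_mulV.

Definition inEn (x : fpow) : wr := (x, 0%R).
Definition alpha : wr := (1%g, inZp 1).

Definition Zn : {set fpow} := ('Z([set: fpow]))%g.
Definition Fn : {set fpow} := [set z in Zn | (\prod_(i < m.+1) z i)%g == 1%g].

Definition Zw : {set wr} := inEn @: Zn.
Definition Fw : {set wr} := inEn @: Fn.

(* J_n = K_n semidirect <alpha_n>, realised as (E_n semidirect <alpha_n>)/F_n;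
   L_n = Z_n/F_n inside J_n *)
Definition Jn := ([set: wr] / Fw)%g.
Definition Ln := (Zw / Fw)%g.
Definition JLn := (Jn / Ln)%g.
Definition clsJL (u : wr) := coset Ln (coset Fw u).

End Defs.

Definition phi (gT : finGroupType) (m k : nat) (x : fpow gT m) : fpow gT k :=
  [ffun i : 'I_k.+1 => (\prod_(r < m.+1 | r %% k.+1 == i) x r)%g].

(* the number of coordinates of E_n is p^n = (pn p n).+1 *)
Definition pn (p n : nat) := (p ^ n).-1.

(* Main.v *)
Require Import Defs.
From HB Require Import structures.
From mathcomp Require Import all_boot all_order all_algebra all_fingroup all_solvable.
Set Implicit Arguments. Unset Strict Implicit. Unset Printing Implicit Defensive.
Import GRing.Theory.
Local Open Scope group_scope.

Lemma fpowM (T : finGroupType) m (x y : fpow T m) i : (x * y) i = x i * y i.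
Proof. exact: ffunE. Qed.
Lemma fpow1 (T : finGroupType) m i : (1 : fpow T m) i = 1.
Proof. exact: ffunE. Qed.
Lemma fpowV (T : finGroupType) m (x : fpow T m) i : (x^-1) i = (x i)^-1.
Proof. exact: ffunE. Qed.
Lemma shiftE (T : finGroupType) m a (x : fpow T m) i : shift a x i = x (i - a)%R.
Proof. exact: ffunE. Qed.
Lemma wrM (T : finGroupType) m (u v : wr T m) : u * v = (u.1 * shift u.2 v.1, (u.2 + v.2)%R).
Proof. by []. Qed.
Lemma wrV (T : finGroupType) m (u : wr T m) : u^-1 = (shift (- u.2)%R (u.1)^-1, (- u.2)%R).
Proof. by []. Qed.

Section Red.
Variables m k : nat.
Hypothesis dvd : k.+1 %| m.+1.
Definition red (a : 'I_m.+1) : 'I_k.+1 := inZp a.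
Lemma red_val a : val (red a) = a %% k.+1. Proof. by []. Qed.
Lemma redD a b : red (a + b)%R = (red a + red b)%R.
Proof. by apply: val_inj; rewrite /= modn_dvdm // modnDm. Qed.
Lemma red0 : red 0%R = 0%R.
Proof. by apply: val_inj; rewrite /= mod0n. Qed.
Lemma redN a : red (- a)%R = (- red a)%R.
Proof. by apply/eqP; rewrite -addr_eq0 -redD addNr red0. Qed.
Lemma redB a b : red (a - b)%R = (red a - red b)%R.
Proof. by rewrite redD redN. Qed.
Lemma red1 : red (inZp 1) = inZp 1.
Proof. by apply: val_inj; rewrite /= modn_dvdm. Qed.
End Red.

Section Ab.
Variable B : finGroupType.
Hypothesis cB : forall a b : B, commute a b.
Lemma mulgC_B : commutative (@mulg B). Proof. exact: cB. Qed.
HB.instance Definition _ := Monoid.isComLaw.Build B 1 mulg (@mulgA B) mulgC_B (@mul1g B).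

Lemma phiM m k (x y : fpow B m) : phi k (x * y) = phi k x * phi k y.
Proof.
apply/ffunP=> i; rewrite fpowM !ffunE.
under eq_bigr do rewrite fpowM.
exact: big_split.
Qed.

Lemma phi1 m k : phi k (1 : fpow B m) = 1.
Proof. by apply/ffunP=> i; rewrite fpow1 ffunE big1 // => r _; rewrite fpow1. Qed.

Lemma phi_shift m k (dvd : k.+1 %| m.+1) (a : 'I_m.+1) (y : fpow B m) :
  phi k (shift a y) = shift (red k a) (phi k y).
Proof.
apply/ffunP=> i; rewrite shiftE !ffunE.
rewrite (reindex (fun r : 'I_m.+1 => r + a)%R); last first.
  by exists (fun r : 'I_m.+1 => r - a)%R => r _; rewrite ?subrK ?addrK.
apply: eq_big => r; last by rewrite shiftE addrK.
rewrite -!(red_val k) !val_eqE redD //.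
by apply/eqP/eqP => H; [rewrite -H addrK | rewrite H subrK].
Qed.

Lemma prod_shift m (a : 'I_m.+1) (y : fpow B m) :
  \prod_(i < m.+1) shift a y i = \prod_(i < m.+1) y i.
Proof.
rewrite (reindex (fun r : 'I_m.+1 => r + a)%R) /=.
  by apply: eq_bigr => r _; rewrite shiftE addrK.
by exists (fun r : 'I_m.+1 => r - a)%R => r _; rewrite ?subrK ?addrK.
Qed.
End Ab.
Lemma fpowP (T : finGroupType) m (x y : fpow T m) : (forall i, x i = y i) -> x = y.
Proof. by move=> H; apply/ffunP. Qed.

Import GRing.Theory.
Local Open Scope group_scope.

Section Main.
Variable gT : finGroupType.
Hypothesis cl2 : nil_class [set: gT] = 2.

Local Notation Z := ('Z([set: gT])).
Local Notation A := (coset_of Z).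
Lemma inNZ x : x \in 'N(Z).
Proof. exact: subsetP (normal_norm (center_normal _)) x (in_setT x). Qed.

Lemma cA : forall a b : A, commute a b.
Proof.
have ab : abelian ([set: gT] / Z).
  by apply: sub_der1_abelian; rewrite -nil_class2 cl2.
move=> a b; case: (cosetP a) => x _ ->; case: (cosetP b) => y _ ->.
have Hx := mem_quotient Z (in_setT x); have Hy := mem_quotient Z (in_setT y).
exact: (centsP ab).
Qed.

Definition pr m (x : fpow gT m) : fpow A m := [ffun i => coset Z (x i)].

Lemma prE m (x : fpow gT m) i : pr x i = coset Z (x i).
Proof. exact: ffunE. Qed.

Lemma prM m (x y : fpow gT m) : pr (x * y) = pr x * pr y.
Proof. by apply: fpowP=> i; rewrite fpowM !prE fpowM morphM ?inNZ. Qed.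
Lemma prV m (x : fpow gT m) : pr (x^-1) = (pr x)^-1.
Proof. by apply: fpowP=> i; rewrite fpowV !prE fpowV morphV ?inNZ. Qed.
Lemma pr1 m : pr (1 : fpow gT m) = 1.
Proof. by apply: fpowP=> i; rewrite fpow1 !prE fpow1 morph1. Qed.
Lemma pr_shift m a (x : fpow gT m) : pr (shift a x) = shift a (pr x).
Proof. by apply: fpowP=> i; rewrite prE !shiftE prE. Qed.
Lemma pr_phi m k (x : fpow gT m) : pr (phi k x) = phi k (pr x).
Proof.
apply: fpowP=> i; rewrite !ffunE morph_prod; last by move=> *; exact: inNZ.
by apply: eq_bigr => r _; rewrite ffunE.
Qed.

Lemma inZn m (x : fpow gT m) : (x \in Zn gT m) = (pr x == 1).
Proof.
apply/idP/idP.
  move/centerP=> [_ cx]; apply/eqP/ffunP=> i; rewrite ffunE fpow1.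
  apply: coset_id; apply/centerP; split; first by rewrite inE.
  move=> g _.
  pose y : fpow gT m := [ffun j => if j == i then g else 1].
  have := cx y (in_setT y) => /(congr1 (fun z : fpow gT m => z i)).
  by rewrite !fpowM /y ffunE eqxx.
move/eqP=> H; apply/centerP; split; first by rewrite inE.
move=> y _; apply: fpowP=> i; rewrite !fpowM.
have : pr x i = 1 by rewrite H fpow1.
rewrite ffunE => /coset_idr => /(_ (inNZ _)) /centerP [_ c].
exact: c (in_setT _).
Qed.

Lemma shift1 m a : shift a (1 : fpow A m) = 1.
Proof. by apply: fpowP=> i; rewrite shiftE !fpow1. Qed.

Lemma Zn_coord m (z : fpow gT m) i : z \in Zn gT m -> z i \in Z.
Proof.
rewrite inZn => /eqP H; apply: coset_idr; first exact: inNZ.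
by rewrite -prE H fpow1.
Qed.

Lemma shift_Zn m a (z : fpow gT m) : z \in Zn gT m -> shift a z \in Zn gT m.
Proof. by rewrite !inZn pr_shift => /eqP ->; rewrite shift1. Qed.

Lemma cZsub : forall a b : subg_of ('Z([set: gT]))%G, commute a b.
Proof.
move=> a b; apply: val_inj => /=.
have /centerP[_ c] := subgP a; exact: c (in_setT _).
Qed.

Lemma prod_shiftZ m a (z : fpow gT m) : (forall i, z i \in Z) ->
  \prod_(i < m.+1) shift a z i = \prod_(i < m.+1) z i.
Proof.
move=> Hz.
pose yz : fpow (subg_of ('Z([set: gT]))%G) m := [ffun i => subg _ (z i)].
have sgP : forall F : 'I_m.+1 -> subg_of ('Z([set: gT]))%G,
    sgval (\prod_(i < m.+1) F i) = \prod_(i < m.+1) sgval (F i).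
  by move=> F; apply: (big_morph sgval).
have e1 : \prod_(i < m.+1) z i = sgval (\prod_(i < m.+1) yz i).
  by rewrite sgP; apply: eq_bigr => i _; rewrite ffunE subgK.
have e2 : \prod_(i < m.+1) shift a z i = sgval (\prod_(i < m.+1) shift a yz i).
  by rewrite sgP; apply: eq_bigr => i _; rewrite !shiftE ffunE subgK.
by rewrite e1 e2 (prod_shift cZsub).
Qed.

Lemma shift_Fn m a (z : fpow gT m) : z \in Fn gT m -> shift a z \in Fn gT m.
Proof.
rewrite inE => /andP[Hz Hp]; rewrite inE; apply/andP; split; first exact: shift_Zn.
apply/eqP; apply: etrans (eqP Hp); apply: prod_shiftZ => i; exact: Zn_coord.
Qed.

Lemma conj_inEn m (z : fpow gT m) (u : wr gT m) : z \in Zn gT m ->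
  inEn z ^ u = inEn (shift (- u.2)%R z).
Proof.
case: u => y a Hz; rewrite /conjg wrV !wrM /inEn /=.
rewrite add0r addNr shift0; congr pair.
rewrite -!shiftM; congr shift.
have /centerP[_ c] := Hz; by rewrite (c y (in_setT _)) mulKg.
Qed.

Lemma nFw m u : u \in 'N(Fw gT m).
Proof.
rewrite inE; apply/subsetP => w; rewrite mem_conjg => /imsetP[z Hz Ew].
rewrite -(conjgKV u w) Ew conj_inEn; last by move: Hz; rewrite inE => /andP[].
by apply: imset_f; apply: shift_Fn.
Qed.

Lemma nZw m u : u \in 'N(Zw gT m).
Proof.
rewrite inE; apply/subsetP => w; rewrite mem_conjg => /imsetP[z Hz Ew].
rewrite -(conjgKV u w) Ew conj_inEn //.
by apply: imset_f; apply: shift_Zn.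
Qed.

Lemma nLn m (ub : coset_of (Fw gT m)) : ub \in 'N(Ln gT m).
Proof.
case: (cosetP ub) => u Nu ->; apply/normP.
have := morphimJ (coset_morphism (Fw gT m)) (Zw gT m) Nu; rewrite (normP (nZw u)) => e; exact: (esym e).
Qed.

Lemma clsJLM m (u v : wr gT m) : clsJL (u * v) = clsJL u * clsJL v.
Proof. by rewrite /clsJL morphM ?nFw // morphM ?nLn. Qed.

Lemma clsJL_Zw m (u : wr gT m) : u \in Zw gT m -> clsJL u = 1.
Proof. by move=> Hu; apply: coset_id; exact: (mem_morphim (coset_morphism (Fw gT m)) (nFw u) Hu). Qed.

Lemma clsJL_eq m (u v : wr gT m) : u.2 = v.2 -> pr u.1 = pr v.1 -> clsJL u = clsJL v.
Proof.
case: u v => [x a] [y b] /= <- e.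
have -> : (x, a) = inEn (x * y^-1) * (y, a) :> wr gT m.
  by rewrite wrM /inEn /= shift0 add0r mulgVK.
rewrite clsJLM clsJL_Zw ?mul1g //; apply: imset_f.
by rewrite inZn prM prV e mulgV.
Qed.

Lemma coset_eq (T : finGroupType) (H : {set T}) a b :
  a \in 'N(H) -> b \in 'N(H) -> a * b^-1 \in H -> coset H a = coset H b.
Proof.
move=> Na Nb Hab; rewrite -[a](mulgVK b) morphM ?groupM ?groupV //.
by rewrite /= coset_id ?mul1g.
Qed.

Lemma nZn m x : x \in 'N(Zn gT m).
Proof. exact: subsetP (normal_norm (center_normal _)) x (in_setT x). Qed.

Section Gen.
Variables m k : nat.
Hypothesis dvd : k.+1 %| m.+1.

Definition h0 (x : fpow gT m) := coset (Zn gT k) (phi k x).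

Lemma h0M : {in [set: fpow gT m] &, {morph h0 : x y / x * y}}.
Proof.
move=> x y _ _; rewrite /h0 -morphM ?nZn //; apply: coset_eq; rewrite ?nZn //.
by rewrite inZn prM prV prM !pr_phi prM (phiM cA) mulgV.
Qed.

Definition h0m : {morphism [set: fpow gT m] >-> coset_of (Zn gT k)} := Morphism h0M.

Lemma K0 : 'ker (coset (Zn gT m)) \subset 'ker h0m.
Proof.
rewrite ker_coset_prim; apply: subset_trans (subsetIl _ _) _; rewrite gen_subG.
apply/subsetP => z Hz; apply/kerP; first exact: in_setT.
rewrite /= /h0; apply: coset_id.
by move: Hz; rewrite !inZn pr_phi => /eqP ->; rewrite phi1.
Qed.

Lemma S0 : [set: fpow gT m] \subset 'N(Zn gT m).
Proof. by apply/subsetP => x _; exact: nZn. Qed.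

Definition theta (u : wr gT m) : wr gT k := (phi k u.1, red k u.2).
Definition hh (u : wr gT m) := clsJL (theta u).

Lemma hhM : {in [set: wr gT m] &, {morph hh : x y / x * y}}.
Proof.
move=> [x a] [y b] _ _; rewrite /hh -clsJLM; apply: clsJL_eq => /=.
  by rewrite (redD dvd).
rewrite pr_phi prM prM pr_shift pr_phi pr_shift pr_phi (phiM cA).
by rewrite (phi_shift cA dvd).
Qed.

Definition hm : {morphism [set: wr gT m] >-> coset_of (Ln gT k)} := Morphism hhM.

Lemma hm_Zw w : w \in Zw gT m -> hm w = 1.
Proof.
case/imsetP => z Hz ->; rewrite /= /hh /theta /= red0.
apply: clsJL_Zw; apply: imset_f.
by move: Hz; rewrite !inZn pr_phi => /eqP ->; rewrite phi1.
Qed.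

Lemma K1 : 'ker (coset (Fw gT m)) \subset 'ker hm.
Proof.
rewrite ker_coset_prim; apply: subset_trans (subsetIl _ _) _; rewrite gen_subG.
apply/subsetP => w Hw; apply/kerP; first exact: in_setT.
apply: hm_Zw; case/imsetP: Hw => z Hz ->; apply: imset_f.
by move: Hz; rewrite inE => /andP[].
Qed.

Lemma S1 : [set: wr gT m] \subset 'N(Fw gT m).
Proof. by apply/subsetP => x _; exact: nFw. Qed.

Definition f1 := factm_morphism K1 S1.

Lemma K2 : 'ker (coset (Ln gT m)) \subset 'ker f1.
Proof.
rewrite ker_coset_prim; apply: subset_trans (subsetIl _ _) _; rewrite gen_subG.
apply/subsetP => y Hy.
case/morphimP: (Hy) => w Nw Zw_w Ey.
have Dy : y \in coset (Fw gT m) @* [set: wr gT m].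
  by rewrite Ey; apply: mem_morphim => //; exact: in_setT.
apply/kerP => //; rewrite Ey; apply: etrans (factmE _ _ (in_setT w)) _.
exact: hm_Zw.
Qed.

Lemma S2 : coset (Fw gT m) @* [set: wr gT m] \subset 'N(Ln gT m).
Proof. by apply/subsetP => x _; exact: nLn. Qed.

Definition ff := factm_morphism K2 S2.

End Gen.
End Main.
Close Scope group_scope.
Unset Implicit Arguments.

Theorem theorem4p3 (gT : finGroupType) (p n : nat) :
  prime p -> (p.-group [set: gT])%g -> ~~ abelian [set: gT] ->
  nil_class [set: gT] = 2 -> cyclic ('Z([set: gT]))%g -> 0 < n ->
  (* phi_n induces psi_n : E_n / Z_n -> E_{n-1} / Z_{n-1} *)
  (exists g : {morphism ([set: fpow gT (pn p n)] / Zn gT (pn p n))%g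
                >-> coset_of (Zn gT (pn p n.-1))},
     forall x : fpow gT (pn p n),
       g (coset (Zn gT (pn p n)) x)
       = coset (Zn gT (pn p n.-1)) (phi (pn p n.-1) x))
  /\
  (* psi_n extends, with alpha_n |-> alpha_{n-1}, to J_n/L_n -> J_{n-1}/L_{n-1} *)
  (exists f : {morphism JLn gT (pn p n) >-> coset_of (Ln gT (pn p n.-1))},
     [/\ (f @* JLn gT (pn p n) \subset JLn gT (pn p n.-1))%g,
         forall x : fpow gT (pn p n),
           f (clsJL (inEn x)) = clsJL (inEn (phi (pn p n.-1) x))
       & f (clsJL (alpha gT (pn p n))) = clsJL (alpha gT (pn p n.-1))]).
Proof.
Local Open Scope group_scope.
move=> pr_p _ _ cl2 _ n_gt0.
have dvd : (pn p n.-1).+1 %| (pn p n).+1.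
  by rewrite /pn !prednK ?expn_gt0 ?prime_gt0 // dvdn_exp2l // leq_pred.
split.
  exists (factm_morphism (K0 cl2 (pn p n) (pn p n.-1)) (S0 gT (pn p n))) => x.
  exact: (factmE _ _ (in_setT x)).
exists (ff cl2 dvd); split.
- have e := morphim_factm (K2 cl2 dvd) (S2 gT (pn p n)) (coset (Fw gT (pn p n)) @* [set: wr gT (pn p n)]).
  have e2 := morphim_factm (K1 cl2 dvd) (S1 gT (pn p n)) [set: wr gT (pn p n)].
  rewrite (_ : ff cl2 dvd @* JLn gT (pn p n) = hm cl2 dvd @* [set: wr gT (pn p n)]); last exact: etrans e e2.
  apply/subsetP => y /morphimP[u _ _ ->].
  apply: mem_morphim; first exact: nLn.
  apply: mem_morphim; first exact: nFw.
  exact: in_setT.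
- move=> x.
  have Dx : coset (Fw gT (pn p n)) (inEn x) \in coset (Fw gT (pn p n)) @* [set: wr gT (pn p n)].
    by apply: mem_morphim; [exact: nFw | exact: in_setT].
  apply: etrans (factmE _ _ Dx) _.
  apply: etrans (factmE _ _ (in_setT _)) _.
  by rewrite /= /hh /theta /= red0.
- have Dx : coset (Fw gT (pn p n)) (alpha gT (pn p n)) \in coset (Fw gT (pn p n)) @* [set: wr gT (pn p n)].
    by apply: mem_morphim; [exact: nFw | exact: in_setT].
  apply: etrans (factmE _ _ Dx) _.
  apply: etrans (factmE _ _ (in_setT _)) _.
  by rewrite /= /hh /theta /= phi1 (red1 dvd).
Qed.
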